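(* Let $\Phi$ (dimension $d$), $\Psi$ (dimension $e$) be $\mathbf t$-modules over $K$, $\delta\in\mathrm{Der}(\Phi,\Psi)$, and let $0\to F\xrightarrow{i}X\xrightarrow{\pi}E\to0$ be the short exact sequence given by $\delta$, i.e. $F=\Psi$, $E=\Phi$, $X_a=\begin{bmatrix}\Phi_a&0\\ \delta(a)&\Psi_a\end{bmatrix}$, $i=\begin{bmatrix}0\\ I_e\end{bmatrix}$, $\pi=\begin{bmatrix}I_d&0\end{bmatrix}$. Let $G$ be a $\mathbf t$-module. Then: (i) there is an exact sequence of $\mathbb F_q[t]$-modules $$0\to\operatorname{Hom}_\tau(G,F)\xrightarrow{i\circ-}\operatorname{Hom}_\tau(G,X)\xrightarrow{\pi\circ-}\operatorname{Hom}_\tau(G,E)\xrightarrow{\delta\circ-}\operatorname{Ext}^1_\tau(G,F)\xrightarrow{-i\circ-}\operatorname{Ext}^1_\tau(G,X)\xrightarrow{-\pi\circ-}\operatorname{Ext}^1_\tau(G,E)\to0,$$ where $\delta\circ-$ sends $f$ to the class of the biderivation $a\mapsto\delta(a)f$, and $-i\circ-$, $-\pi\circ-$ send the class of a biderivation $\eta$ to the class of $a\mapsto -i\eta(a)$, resp. $a\mapsto-\pi\eta(a)$; (ii) there is an exact sequence of $\mathbb F_q[t]$-modules $$0\to\operatorname{Hom}_\tau(E,G)\xrightarrow{-\circ\pi}\operatorname{Hom}_\tau(X,G)\xrightarrow{-\circ i}\operatorname{Hom}_\tau(F,G)\xrightarrow{-\circ\delta}\operatorname{Ext}^1_\tau(E,G)\xrightarrow{-\circ(-\pi)}\operatorname{Ext}^1_\tau(X,G)\xrightarrow{-\circ(-i)}\operatorname{Ext}^1_\tau(F,G)\to0,$$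 where $-\circ\delta$ sends $h$ to the class of $a\mapsto h\delta(a)$, and the last two maps send the class of $\eta$ to the class of $a\mapsto-\eta(a)\pi$, resp. $a\mapsto-\eta(a)i$.
   Context: $A=\mathbb F_q[t]$, $K$ a field of characteristic $p$ with $\mathbb F_q$-algebra map $\iota:A\to K$, $\theta=\iota(t)$; $K\{\tau\}$ twisted polynomials with $\tau x=x^q\tau$. A $\mathbf t$-module of dimension $d$: $\mathbb F_q$-algebra homomorphism $\Phi:\mathbb F_q[t]\to\mathrm{Mat}_d(K\{\tau\})$ with $\Phi_t=(\theta I+N)+\sum_{i\ge1}M_i\tau^i$, $N$ nilpotent. $\operatorname{Hom}_\tau(\Psi,\Phi)$ (for $\Psi$ of dim $e$, $\Phi$ of dim $d$) is the set of $f\in\mathrm{Mat}_{d\times e}(K\{\tau\})$ with $f\Psi_t=\Phi_tf$, an $\mathbb F_q[t]$-module via $a\cdot f=\Phi_af$. $\mathrm{Der}(\Phi,\Psi)$: $\mathbb F_q$-linear $\delta:\mathbb F_q[t]\to\mathrm{Mat}_{e\times d}(K\{\tau\})$ with $\delta(ab)=\Psi_a\delta(b)+\delta(a)\Phi_b$; inner: $\delta^{(U)}(a)=U\Phi_a-\Psi_aU$; $\operatorname{Ext}^1_\tau(\Phi,\Psi)=\mathrm{Der}(\Phi,\Psi)/\mathrm{Der}_{in}(\Phi,\Psi)$ with $a*[\delta]=[\Psi_a\delta]$; this is the group (with Baer sum) of extensions $0\to\Psi\to X\to\Phi\to0$ of $\mathbf t$-modules, $[\delta]$ corresponding to $X_a=\begin{bmatrix}\Phi_a&0\\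 \delta(a)&\Psi_a\end{bmatrix}$. *)

(* Defs.v *)
From HB Require Import structures.
From mathcomp Require Import all_boot all_order all_algebra.
Set Implicit Arguments. Unset Strict Implicit. Unset Printing Implicit Defensive.
Import GRing.Theory.
Local Open Scope ring_scope.

(* Twisted polynomials K{tau}, tau x = x^q tau, with q = #|F| where F = F_q.  *)
(* An element  sum_i a_i tau^i  is represented by the polynomial             *)
(* sum_i a_i X^i : {poly K} (same additive group), with the twisted product. *)

Definition tmul (F : finFieldType) (K : fieldType) (p r : {poly K}) : {poly K} :=
  \sum_(i < size p) (p`_i *: 'X^i) * map_poly (fun x => x ^+ (#|F| ^ i)) r.

Definition tmulmx (F : finFieldType) (K : fieldType) (m n k : nat)
  (A : 'M[{poly K}]_(m, n)) (B : 'M[{poly K}]_(n, k)) : 'M[{poly K}]_(m, k) :=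
  \matrix_(i, j) \sum_(l < n) tmul F (A i l) (B l j).

Definition tscale (F : finFieldType) (K : fieldType) (f : {rmorphism F -> K})
  (m n : nat) (c : F) (A : 'M[{poly K}]_(m, n)) : 'M[{poly K}]_(m, n) :=
  map_mx (fun p => f c *: p) A.

(* A t-module of dimension d over K: an F_q-algebra homomorphism
   Phi : F_q[t] -> Mat_d(K{tau}) with Phi_t = (theta I + N) + sum_{i>=1} M_i tau^i,
   N nilpotent.  Here F_q[t] = {poly F}, t = 'X, theta = iota(t). *)
Definition is_tmodule (F : finFieldType) (K : fieldType) (f : {rmorphism F -> K})
  (theta : K) (d : nat) (Phi : {poly F} -> 'M[{poly K}]_d) : Prop :=
  [/\ (forall (c : F) (a b : {poly F}), Phi (c *: a + b) = tscale f c (Phi a) + Phi b),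
      Phi 1 = 1%:M,
      (forall a b : {poly F}, Phi (a * b) = tmulmx F (Phi a) (Phi b)) &
      exists N : 'M[K]_d, (exists k : nat, N ^+ k = 0) /\
        map_mx (fun p : {poly K} => p`_0) (Phi 'X) = theta%:M + N].

Definition is_thom (F : finFieldType) (K : fieldType) (e d : nat)
  (Psi : {poly F} -> 'M[{poly K}]_e) (Phi : {poly F} -> 'M[{poly K}]_d)
  (h : 'M[{poly K}]_(d, e)) : Prop :=
  tmulmx F h (Psi 'X) = tmulmx F (Phi 'X) h.

Definition is_der (F : finFieldType) (K : fieldType) (f : {rmorphism F -> K})
  (d e : nat) (Phi : {poly F} -> 'M[{poly K}]_d) (Psi : {poly F} -> 'M[{poly K}]_e)
  (delta : {poly F} -> 'M[{poly K}]_(e, d)) : Prop :=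
  (forall (c : F) (a b : {poly F}), delta (c *: a + b) = tscale f c (delta a) + delta b) /\
  (forall a b : {poly F},
      delta (a * b) = tmulmx F (Psi a) (delta b) + tmulmx F (delta a) (Phi b)).

Definition is_inner (F : finFieldType) (K : fieldType)
  (d e : nat) (Phi : {poly F} -> 'M[{poly K}]_d) (Psi : {poly F} -> 'M[{poly K}]_e)
  (delta : {poly F} -> 'M[{poly K}]_(e, d)) : Prop :=
  exists U : 'M[{poly K}]_(e, d),
    forall a, delta a = tmulmx F U (Phi a) - tmulmx F (Psi a) U.

Definition ext_tmod (F : finFieldType) (K : fieldType) (d e : nat)
  (Phi : {poly F} -> 'M[{poly K}]_d) (Psi : {poly F} -> 'M[{poly K}]_e)
  (delta : {poly F} -> 'M[{poly K}]_(e, d)) : {poly F} -> 'M[{poly K}]_(d + e) :=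
  fun a => block_mx (Phi a) 0 (delta a) (Psi a).

Definition tincl (K : fieldType) (d e : nat) : 'M[{poly K}]_(d + e, e) :=
  col_mx 0 1%:M.
Definition tproj (K : fieldType) (d e : nat) : 'M[{poly K}]_(d, d + e) :=
  row_mx 1%:M 0.

(* Modules presented as subquotients: a carrier, a membership predicate,     *)
(* an equivalence (equality of classes), the F_q[t]-action, sum and zero.   *)
Record sqmod (A : Type) := SQ {
  sq_car : Type;
  sq_mem : sq_car -> Prop;
  sq_eqv : sq_car -> sq_car -> Prop;
  sq_act : A -> sq_car -> sq_car;
  sq_add : sq_car -> sq_car -> sq_car;
  sq_zero : sq_car }.

Definition HomSQ (F : finFieldType) (K : fieldType) (m n : nat)
  (S : {poly F} -> 'M[{poly K}]_m) (T : {poly F} -> 'M[{poly K}]_n) : sqmod {poly F} :=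
  @SQ {poly F} 'M[{poly K}]_(n, m) (is_thom S T) (fun x y => x = y)
      (fun a h => tmulmx F (T a) h) +%R 0.

Definition ExtSQ (F : finFieldType) (K : fieldType) (f : {rmorphism F -> K})
  (m n : nat) (S : {poly F} -> 'M[{poly K}]_m) (T : {poly F} -> 'M[{poly K}]_n)
  : sqmod {poly F} :=
  @SQ {poly F} ({poly F} -> 'M[{poly K}]_(n, m)) (is_der f S T)
      (fun eta1 eta2 => is_inner S T (fun a => eta1 a - eta2 a))
      (fun a eta => fun b => tmulmx F (T a) (eta b))
      (fun eta1 eta2 => fun b => eta1 b + eta2 b) (fun _ => 0).

Definition sq_morph (A : Type) (M N : sqmod A) (phi : sq_car M -> sq_car N) : Prop :=
  [/\ (forall x, sq_mem x -> sq_mem (phi x)),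
      (forall x y, sq_mem x -> sq_mem y -> sq_eqv x y -> sq_eqv (phi x) (phi y)) &
      (forall a x y, sq_mem x -> sq_mem y ->
          sq_eqv (phi (sq_add (sq_act a x) y)) (sq_add (sq_act a (phi x)) (phi y)))].

Definition exact_seq6 (A : Type) (M1 M2 M3 M4 M5 M6 : sqmod A)
  (f1 : sq_car M1 -> sq_car M2) (f2 : sq_car M2 -> sq_car M3)
  (f3 : sq_car M3 -> sq_car M4) (f4 : sq_car M4 -> sq_car M5)
  (f5 : sq_car M5 -> sq_car M6) : Prop :=
  [/\ [/\ sq_morph f1, sq_morph f2, sq_morph f3, sq_morph f4 & sq_morph f5],
      (forall x, sq_mem x -> sq_eqv (f1 x) (sq_zero M2) -> sq_eqv x (sq_zero M1)),
      [/\ (forall y, sq_mem y ->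
             (sq_eqv (f2 y) (sq_zero M3) <-> exists x, sq_mem x /\ sq_eqv y (f1 x))),
          (forall y, sq_mem y ->
             (sq_eqv (f3 y) (sq_zero M4) <-> exists x, sq_mem x /\ sq_eqv y (f2 x))),
          (forall y, sq_mem y ->
             (sq_eqv (f4 y) (sq_zero M5) <-> exists x, sq_mem x /\ sq_eqv y (f3 x))) &
          (forall y, sq_mem y ->
             (sq_eqv (f5 y) (sq_zero M6) <-> exists x, sq_mem x /\ sq_eqv y (f4 x)))] &
      (forall z, sq_mem z -> exists y, sq_mem y /\ sq_eqv (f5 y) z)].

Arguments exact_seq6 {A} M1 M2 M3 M4 M5 M6 f1 f2 f3 f4 f5.

(* Main.v *)
Require Import Defs.
From Stdlib Require Import FunctionalExtensionality.
From HB Require Import structures.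
From mathcomp Require Import all_boot all_order all_algebra all_field.
Set Implicit Arguments. Unset Strict Implicit. Unset Printing Implicit Defensive.
Import GRing.Theory.
Local Open Scope ring_scope.

Definition TKr (F : finFieldType) (K : fieldType) (f : {rmorphism F -> K}) : Type := {poly K}.

Section Skew.
Variables (F : finFieldType) (K : fieldType) (f : {rmorphism F -> K}).

Definition frob (i : nat) (x : K) : K := x ^+ (#|F| ^ i).

Lemma frob_nat i : [pchar K].-nat (#|F| ^ i)%N.
Proof.
have [p pr pF] := finPcharP F; have pK := rmorph_pchar f pF.
rewrite (card_pprimeChar pF) -expnM (eq_pnat _ (pcharf_eq pK)).
by rewrite pnatX pnat_id.
Qed.

Lemma frobDD i x y : frob i (x + y) = frob i x + frob i y.
Proof. exact: exprDn_pchar (frob_nat i). Qed.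

Lemma frobN i x : frob i (- x) = - frob i x.
Proof.
have q0 : (0 < #|F|)%N by apply/card_gt0P; exists 0.
apply/eqP; rewrite -subr_eq0 opprK -frobDD addNr /frob expr0n.
by rewrite expn_eq0 eqn0Ngt q0.
Qed.

Lemma frobB i : zmod_morphism (frob i).
Proof. by move=> x y; rewrite frobDD frobN. Qed.

Lemma frobM i : monoid_morphism (frob i).
Proof. by split; [rewrite /frob expr1n | move=> x y; rewrite /frob exprMn]. Qed.

HB.instance Definition _ i := GRing.isZmodMorphism.Build K K (frob i) (frobB i).
HB.instance Definition _ i := GRing.isMonoidMorphism.Build K K (frob i) (frobM i).

Lemma frob0 x : frob 0 x = x.
Proof. by rewrite /frob expn0 expr1. Qed.

Lemma frobC i j x : frob i (frob j x) = frob (i + j) x.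
Proof. by rewrite /frob -exprM -expnD addnC. Qed.




Local Notation tm := (@tmul F K).
Local Notation T i := (map_poly (frob i)).

Lemma tmulE (p r : {poly K}) : tm p r = \sum_(i < size p) (p`_i *: 'X^i) * T i r.
Proof. by []. Qed.

Lemma tmul_wide (p r : {poly K}) N : (size p <= N)%N ->
  tm p r = \sum_(i < N) (p`_i *: 'X^i) * T i r.
Proof.
move=> le; rewrite tmulE (big_ord_widen _ (fun i => (p`_i *: 'X^i) * T i r) le) big_mkcond /=.
apply: eq_bigr => i _; case: ifP => // /negbT; rewrite -leqNgt => H.
by rewrite nth_default // scale0r mul0r.
Qed.

Lemma tmulDl (p p' r : {poly K}) : tm (p + p') r = tm p r + tm p' r.
Proof.
set N := maxn (size p) (size p').
rewrite (@tmul_wide _ _ N) ?(leq_trans (size_polyD _ _)) // (@tmul_wide p _ N) ?leq_maxl //.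
rewrite (@tmul_wide p' _ N) ?leq_maxr // -big_split /=.
by apply: eq_bigr => i _; rewrite coefD scalerDl mulrDl.
Qed.

Lemma tmul0l r : tm 0 r = 0.
Proof. by rewrite tmulE size_poly0 big_ord0. Qed.

Lemma tmulDr (p r r' : {poly K}) : tm p (r + r') = tm p r + tm p r'.
Proof. by rewrite !tmulE -big_split /=; apply: eq_bigr => i _; rewrite rmorphD mulrDr. Qed.

Lemma tmul_suml I (s : seq I) (P : pred I) (Q : I -> {poly K}) u :
  tm (\sum_(j <- s | P j) Q j) u = \sum_(j <- s | P j) tm (Q j) u.
Proof.
apply: (big_rec2 (fun x y => tm x u = y)); first exact: tmul0l.
by move=> j x y _ <-; rewrite tmulDl.
Qed.

Lemma tmul_mono c k u : tm (c *: 'X^k) u = c *: 'X^k * T k u.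
Proof.
have H : (size (c *: 'X^k : {poly K}) <= k.+1)%N.
  by apply: (leq_trans (size_scale_leq _ _)); rewrite size_polyXn.
rewrite (tmul_wide _ H) big_ord_recr /= big1 ?add0r.
  by rewrite coefZ coefXn eqxx mulr1.
by move=> i _; rewrite coefZ coefXn ltn_eqF // mulr0 scale0r mul0r.
Qed.

Lemma Texp i (r : {poly K}) :
  T i r = \sum_(j < size r) (frob i r`_j) *: 'X^j.
Proof.
rewrite -{1}[r]coefK poly_def rmorph_sum /=; apply: eq_bigr => j _.
by rewrite map_polyZ /= map_polyXn.
Qed.

Lemma tmul1r r : tm 1 r = r.
Proof.
rewrite (@tmul_wide _ _ 1) ?size_poly1 // big_ord1 coef1 /= scale1r expr0 mul1r.
rewrite (@eq_map_poly _ _ _ id); first exact: map_poly_id.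
by move=> x; rewrite /= frob0.
Qed.

Lemma tmulr1 r : tm r 1 = r.
Proof.
rewrite tmulE (eq_bigr (fun i : 'I_(size r) => r`_i *: 'X^i)).
  by rewrite -poly_def coefK.
by move=> i _; rewrite rmorph1 mulr1.
Qed.

Lemma tmulA (p r u : {poly K}) : tm (tm p r) u = tm p (tm r u).
Proof.
have E : tm p r = \sum_(i < size p) \sum_(j < size r) ((p`_i * frob i r`_j) *: 'X^(i + j)).
  rewrite tmulE; apply: eq_bigr => i _; rewrite Texp mulr_sumr; apply: eq_bigr => j _.
  by rewrite -scalerAl -scalerAr scalerA exprD.
rewrite E tmul_suml [RHS]tmulE; apply: eq_bigr => i _.
rewrite tmul_suml tmulE rmorph_sum mulr_sumr; apply: eq_bigr => j _.
rewrite tmul_mono rmorphM /= map_polyZ /= map_polyXn -map_poly_comp.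
rewrite (@eq_map_poly _ _ (frob i \o frob j) (frob (i + j))); last by move=> x; exact: frobC.
by rewrite -!scalerAl -!scalerAr scalerA exprD mulrA.
Qed.

Local Notation TK := (TKr f).
HB.instance Definition _ := GRing.Zmodule.on TK.
Lemma TK_mulA : associative (@tmul F K : TK -> TK -> TK).
Proof. by move=> x y z; rewrite tmulA. Qed.
Lemma TK_mul1 : left_id (1 : TK) (@tmul F K : TK -> TK -> TK).
Proof. exact: tmul1r. Qed.
Lemma TK_mulr1 : right_id (1 : TK) (@tmul F K : TK -> TK -> TK).
Proof. exact: tmulr1. Qed.
Lemma TK_mulDl : left_distributive (@tmul F K : TK -> TK -> TK) +%R.
Proof. exact: tmulDl. Qed.
Lemma TK_mulDr : right_distributive (@tmul F K : TK -> TK -> TK) +%R.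
Proof. exact: tmulDr. Qed.
HB.instance Definition _ := GRing.Zmodule_isPzRing.Build TK
  TK_mulA TK_mul1 TK_mulr1 TK_mulDl TK_mulDr.


Lemma frobF i c : frob i (f c) = f c.
Proof.
rewrite /frob -rmorphXn; congr (f _); elim: i => [|i IH]; first by rewrite expn0 expr1.
by rewrite expnSr exprM IH expf_card.
Qed.

Definition scT (c : F) : TK := (f c)%:P.

Lemma tmulC_l x p : tm x%:P p = x *: p.
Proof.
rewrite (@tmul_wide _ _ 1) ?size_polyC_leq1 // big_ord1 coefC /= expr0 -scalerAl mul1r.
congr (_ *: _); rewrite (@eq_map_poly _ _ _ id); first exact: map_poly_id.
by move=> y; rewrite /= frob0.
Qed.

Lemma tmulC_r p c : tm p (f c)%:P = f c *: p.
Proof.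
rewrite tmulE (eq_bigr (fun i : 'I_(size p) => f c *: (p`_i *: 'X^i))).
  by rewrite -scaler_sumr -poly_def coefK.
by move=> i _; rewrite map_polyC /= frobF mulrC mul_polyC.
Qed.

Lemma scD x y : scT (x + y) = scT x + scT y.
Proof. by rewrite /scT rmorphD polyCD. Qed.
Lemma scM x y : scT (x * y) = scT x * scT y.
Proof.
have -> : scT x * scT y = tm (f x)%:P (f y)%:P by [].
by rewrite tmulC_l -mul_polyC /scT rmorphM polyCM.
Qed.
Lemma sc1 : scT 1 = 1.
Proof. by rewrite /scT rmorph1. Qed.
Lemma scC x (r : TK) : scT x * r = r * scT x.
Proof.
have -> : scT x * r = tm (f x)%:P r by [].
have -> : r * scT x = tm r (f x)%:P by [].
by rewrite tmulC_l tmulC_r.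
Qed.

Lemma tscaleE m n c (A : 'M[{poly K}]_(m, n)) :
  tscale f c A = (scT c *: (A : 'M[TK]_(m, n)) : 'M[TK]_(m, n)).
Proof.
apply/matrixP => i j; rewrite !mxE.
have -> : scT c * A i j = tm (f c)%:P (A i j) by [].
by rewrite tmulC_l.
Qed.

Lemma tscaleE' m n : @tscale F K f m n = fun c A => (scT c *: (A : 'M[TK]_(m, n)) : 'M[TK]_(m, n)).
Proof.
apply: functional_extensionality => c; apply: functional_extensionality => A.
exact: tscaleE.
Qed.

Lemma tmulmxE m n k : @tmulmx F K m n k = @mulmx TK m n k.
Proof.
apply: functional_extensionality => A; apply: functional_extensionality => B.
by apply/matrixP => i j; rewrite !mxE.
Qed.
End Skew.

Section Abstract.
Variable (F : fieldType) (R : pzRingType) (sc : F -> R).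
Hypothesis scD : forall x y, sc (x + y) = sc x + sc y.
Hypothesis scM : forall x y, sc (x * y) = sc x * sc y.
Hypothesis sc1 : sc 1 = 1.
Hypothesis scC : forall x r, sc x * r = r * sc x.

Lemma sc0 : sc 0 = 0.
Proof. by apply: (@addrI _ (sc 0)); rewrite addr0 -scD addr0. Qed.

Lemma mulmx_sc m n p c (A : 'M[R]_(m, n)) (B : 'M[R]_(n, p)) :
  A *m (sc c *: B) = sc c *: (A *m B).
Proof.
apply/matrixP=> i j; rewrite !mxE mulr_sumr; apply: eq_bigr => k _.
by rewrite mxE mulrA -scC mulrA.
Qed.

Definition linA m n (P : {poly F} -> 'M[R]_(m, n)) :=
  forall c a b, P (c *: a + b) = sc c *: P a + P b.
Definition modA n (P : {poly F} -> 'M[R]_n) :=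
  [/\ linA P, P 1 = 1%:M & forall a b, P (a * b) = P a *m P b].
Definition derA m n (A : {poly F} -> 'M[R]_m) (B : {poly F} -> 'M[R]_n)
  (D : {poly F} -> 'M[R]_(n, m)) :=
  linA D /\ forall a b, D (a * b) = B a *m D b + D a *m A b.
Definition innerA m n (A : {poly F} -> 'M[R]_m) (B : {poly F} -> 'M[R]_n)
  (D : {poly F} -> 'M[R]_(n, m)) :=
  exists U, forall a, D a = U *m A a - B a *m U.

Lemma linA0 m n (P : {poly F} -> 'M[R]_(m, n)) : linA P -> P 0 = 0.
Proof.
move=> L; have := L 1 0 0; rewrite scale1r addr0 sc1 scale1r => E.
by apply: (@addrI _ (P 0)); rewrite addr0 -E.
Qed.
Lemma linAD m n (P : {poly F} -> 'M[R]_(m, n)) a b : linA P -> P (a + b) = P a + P b.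
Proof. by move=> L; rewrite -{1}[a]scale1r L sc1 scale1r. Qed.
Lemma linAZ m n (P : {poly F} -> 'M[R]_(m, n)) c a : linA P -> P (c *: a) = sc c *: P a.
Proof. by move=> L; have := L c a 0; rewrite addr0 (linA0 L) addr0. Qed.
Lemma linAC m n (P : {poly F} -> 'M[R]_(m, n)) c : linA P -> P c%:P = sc c *: P 1.
Proof. by move=> L; rewrite -(mulr1 c%:P) mul_polyC (linAZ _ _ L). Qed.

Lemma modC n (P : {poly F} -> 'M[R]_n) c : modA P -> P c%:P = sc c *: 1%:M.
Proof. by case=> L P1 _; rewrite linAC // P1. Qed.

Lemma hom_all m n (A : {poly F} -> 'M[R]_m) (B : {poly F} -> 'M[R]_n) (h : 'M[R]_(n, m)) :
  modA A -> modA B -> h *m A 'X = B 'X *m h -> forall a, h *m A a = B a *m h.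
Proof.
move=> MA MB H a; have [LA _ MulA] := MA; have [LB _ MulB] := MB.
elim/poly_ind: a => [|a c IH].
  by rewrite (linA0 LA) (linA0 LB) mulmx0 mul0mx.
rewrite (linAD _ _ LA) (linAD _ _ LB) MulA MulB mulmxDr mulmxDl (modC _ MA) (modC _ MB).
by rewrite mulmx_sc mulmx1 -scalemxAl mul1mx mulmxA IH -!mulmxA H.
Qed.

Lemma der1 m n (A : {poly F} -> 'M[R]_m) (B : {poly F} -> 'M[R]_n) D :
  modA A -> modA B -> derA A B D -> D 1 = 0.
Proof.
move=> [_ A1 _] [_ B1 _] [_ MD].
have := MD 1 1; rewrite mulr1 A1 B1 mul1mx mulmx1 => E.
by apply: (@addrI _ (D 1)); rewrite addr0 -E.
Qed.

Lemma der_uniq m n (A : {poly F} -> 'M[R]_m) (B : {poly F} -> 'M[R]_n) D1 D2 :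
  modA A -> modA B -> derA A B D1 -> derA A B D2 -> D1 'X = D2 'X -> forall a, D1 a = D2 a.
Proof.
move=> MA MB H1 H2 HX a.
have D1one := der1 MA MB H1; have D2one := der1 MA MB H2.
case: H1 => L1 M1; case: H2 => L2 M2.
elim/poly_ind: a => [|a c IH]; first by rewrite (linA0 L1) (linA0 L2).
by rewrite (linAD _ _ L1) (linAD _ _ L2) M1 M2 (linAC _ L1) (linAC _ L2) D1one D2one IH HX.
Qed.


Definition pw n (M : 'M[R]_n) k := iter k (fun A => A *m M) 1%:M.
Definition ev n (M : 'M[R]_n) (a : {poly F}) := \sum_(i < size a) sc a`_i *: pw M i.

Lemma ev_wide n (M : 'M[R]_n) (a : {poly F}) N : (size a <= N)%N ->
  ev M a = \sum_(i < N) sc a`_i *: pw M i.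
Proof.
move=> le; rewrite /ev (big_ord_widen _ (fun i => sc a`_i *: pw M i) le) big_mkcond /=.
apply: eq_bigr => i _; case: ifP => // /negbT; rewrite -leqNgt => H.
by rewrite nth_default // sc0 scale0r.
Qed.

Lemma ev_lin n (M : 'M[R]_n) : linA (ev M).
Proof.
move=> c a b; set N := maxn (size a) (size b).
have Ha : (size a <= N)%N by rewrite leq_maxl.
have Hb : (size b <= N)%N by rewrite leq_maxr.
have Hab : (size (c *: a + b)%R <= N)%N.
  apply: (leq_trans (size_polyD _ _)); rewrite geq_max Hb andbT.
  exact: (leq_trans (size_scale_leq _ _) Ha).
rewrite (ev_wide _ Hab) (ev_wide _ Ha) (ev_wide _ Hb) scaler_sumr -big_split /=.
by apply: eq_bigr => i _; rewrite coefD coefZ scD scM scalerDl scalerA.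
Qed.

Lemma ev_C n (M : 'M[R]_n) c : ev M c%:P = sc c *: 1%:M.
Proof.
rewrite (@ev_wide _ _ _ 1) ?size_polyC ?leq_b1 // big_ord1 coefC /=.
by [].
Qed.

Lemma ev_MX n (M : 'M[R]_n) (a : {poly F}) : ev M (a * 'X) = ev M a *m M.
Proof.
have H : (size (a * 'X)%R <= (size a).+1)%N.
  have [->|a0] := eqVneq a 0; first by rewrite mul0r size_poly0.
  by rewrite size_mulX.
rewrite (@ev_wide _ _ _ _ H) big_ord_recl coefMX /= sc0 scale0r add0r.
rewrite /ev mulmx_suml; apply: eq_bigr => i _.
by rewrite coefMX /= -scalemxAl.
Qed.

Lemma ev_mul n (M : 'M[R]_n) (a b : {poly F}) : ev M (a * b) = ev M a *m ev M b.
Proof.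
have L := ev_lin M.
elim/poly_ind: b => [|b c IH].
  by rewrite mulr0 (linA0 L) mulmx0.
rewrite mulrDr mulrA !(linAD _ _ L) !ev_MX ev_C IH -mulmxA.
by rewrite [a * _]mulrC mul_polyC (linAZ _ _ L) mulmxDr mulmx_sc mulmx1.
Qed.

Lemma ev_mod n (M : 'M[R]_n) : modA (ev M).
Proof.
split; first exact: ev_lin.
  by rewrite -polyC1 ev_C sc1 scale1r.
exact: ev_mul.
Qed.

Lemma ev_X n (M : 'M[R]_n) : ev M 'X = M.
Proof. by rewrite -['X]mul1r ev_MX -polyC1 ev_C sc1 scale1r mul1mx. Qed.


Definition extA m n (A : {poly F} -> 'M[R]_m) (B : {poly F} -> 'M[R]_n)
  (D : {poly F} -> 'M[R]_(n, m)) : {poly F} -> 'M[R]_(m + n) :=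
  fun a => block_mx (A a) 0 (D a) (B a).

Lemma extA_mod m n (A : {poly F} -> 'M[R]_m) (B : {poly F} -> 'M[R]_n) D :
  modA A -> modA B -> derA A B D -> modA (extA A B D).
Proof.
move=> MA MB MD; have D1 := der1 MA MB MD.
case: MA => LA A1 MulA; case: MB => LB B1 MulB; case: MD => LD MulD.
split.
- by move=> c a b; rewrite /extA LA LB LD scale_block_mx add_block_mx scaler0 addr0.
- by rewrite /extA A1 B1 D1 -scalar_mx_block.
- move=> a b; rewrite /extA mulmx_block MulA MulB MulD !mulmx0 !mul0mx !addr0 add0r.
  by rewrite addrC.
Qed.

Lemma der_exists m n (A : {poly F} -> 'M[R]_m) (B : {poly F} -> 'M[R]_n)
  (M : 'M[R]_(n, m)) : modA A -> modA B -> exists D, derA A B D /\ D 'X = M.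
Proof.
move=> MA MB; have [LA A1 MulA] := MA; have [LB B1 MulB] := MB.
pose Y : 'M[R]_(m + n) := block_mx (A 'X) 0 M (B 'X).
have LY := ev_lin Y.
have [D HD] : exists D, forall a, ev Y a = block_mx (A a) 0 (D a) (B a).
  exists (fun a => dlsubmx (ev Y a)) => a.
  elim/poly_ind: a => [|a c IH].
    rewrite (linA0 LY) (linA0 LA) (linA0 LB).
    by rewrite -{1}block_mx0; congr block_mx; apply/matrixP=> i j; rewrite !mxE.
  rewrite (linAD _ _ LY) ev_MX ev_C IH mulmx_block scalemx1 scalar_mx_block add_block_mx.
  rewrite block_mxKdl (linAD _ _ LA) (linAD _ _ LB) MulA MulB (modC _ MA) (modC _ MB) scalemx1.
  by rewrite !mulmx0 !mul0mx !addr0 !add0r scalemx1.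
exists D; split; last by have := HD 'X; rewrite ev_X /Y => /eq_block_mx [_ _ <- _].
split.
  move=> c a b; have := LY c a b.
  by rewrite !HD scale_block_mx add_block_mx => /eq_block_mx [_ _ -> _].
move=> a b; have := ev_mul Y a b.
rewrite !HD mulmx_block => /eq_block_mx [_ _ -> _].
by rewrite addrC.
Qed.


Lemma Zswap (V : zmodType) (x y z : V) : x - z = (y - z) + (x - y).
Proof. by rewrite [RHS]addrC addrA subrK. Qed.

Lemma inner_eq m n (S : {poly F} -> 'M[R]_m) (T : {poly F} -> 'M[R]_n) D1 D2 :
  (forall a, D1 a = D2 a) -> innerA S T (fun a => D1 a - D2 a).
Proof. by move=> E; exists 0 => a; rewrite E subrr mul0mx mulmx0 subrr. Qed.

Lemma inner_ext m n (S : {poly F} -> 'M[R]_m) (T : {poly F} -> 'M[R]_n) D1 D2 :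
  (forall a, D1 a = D2 a) -> innerA S T D1 -> innerA S T D2.
Proof. by move=> E [U HU]; exists U => a; rewrite -E HU. Qed.

Lemma inner_opp m n (S : {poly F} -> 'M[R]_m) (T : {poly F} -> 'M[R]_n) D :
  innerA S T D -> innerA S T (fun a => - D a).
Proof. by move=> [U HU]; exists (- U) => a; rewrite HU mulNmx mulmxN opprB opprK addrC. Qed.

Lemma inner_lmul m n n' (S : {poly F} -> 'M[R]_m) (T : {poly F} -> 'M[R]_n)
  (T' : {poly F} -> 'M[R]_n') (L : 'M[R]_(n', n)) D :
  (forall a, L *m T a = T' a *m L) -> innerA S T D -> innerA S T' (fun a => L *m D a).
Proof.
by move=> HL [U HU]; exists (L *m U) => a; rewrite HU mulmxBr !mulmxA HL.
Qed.

Lemma inner_rmul m m' n (S : {poly F} -> 'M[R]_m) (S' : {poly F} -> 'M[R]_m')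
  (T : {poly F} -> 'M[R]_n) (L : 'M[R]_(m, m')) D :
  (forall a, S a *m L = L *m S' a) -> innerA S T D -> innerA S' T (fun a => D a *m L).
Proof.
by move=> HL [U HU]; exists (U *m L) => a; rewrite HU mulmxBl -!mulmxA HL.
Qed.

Lemma der_add m n (S : {poly F} -> 'M[R]_m) (T : {poly F} -> 'M[R]_n) D1 D2 :
  derA S T D1 -> derA S T D2 -> derA S T (fun a => D1 a + D2 a).
Proof.
move=> [L1 M1] [L2 M2]; split.
  by move=> c a b; rewrite L1 L2 scalerDr addrACA.
by move=> a b; rewrite M1 M2 mulmxDr mulmxDl addrACA.
Qed.

Lemma der_opp m n (S : {poly F} -> 'M[R]_m) (T : {poly F} -> 'M[R]_n) D :
  derA S T D -> derA S T (fun a => - D a).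
Proof.
move=> [L1 M1]; split.
  by move=> c a b; rewrite L1 opprD scalerN.
by move=> a b; rewrite M1 opprD mulmxN mulNmx.
Qed.

Lemma der_inner m n (S : {poly F} -> 'M[R]_m) (T : {poly F} -> 'M[R]_n) U :
  modA S -> modA T -> derA S T (fun a => U *m S a - T a *m U).
Proof.
move=> [LS _ MS] [LT _ MT]; split.
  move=> c a b; rewrite LS LT mulmxDr mulmxDl mulmx_sc -scalemxAl opprD addrACA.
  by rewrite scalerBr.
move=> a b; rewrite MS MT mulmxBr mulmxBl !mulmxA.
exact: Zswap.
Qed.


Definition HomA m n (S : {poly F} -> 'M[R]_m) (T : {poly F} -> 'M[R]_n) : sqmod {poly F} :=
  @SQ {poly F} 'M[R]_(n, m) (fun h => h *m S 'X = T 'X *m h) (fun x y => x = y)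
      (fun a h => T a *m h) +%R 0.
Definition ExtA m n (S : {poly F} -> 'M[R]_m) (T : {poly F} -> 'M[R]_n) : sqmod {poly F} :=
  @SQ {poly F} ({poly F} -> 'M[R]_(n, m)) (derA S T)
      (fun eta1 eta2 => innerA S T (fun a => eta1 a - eta2 a))
      (fun a eta => fun b => T a *m eta b)
      (fun eta1 eta2 => fun b => eta1 b + eta2 b) (fun _ => 0).

Lemma Zk (V : zmodType) (x1 y1 x2 y2 : V) : x1 + y1 = x2 + y2 -> y2 - x1 = y1 - x2.
Proof. by move=> E; rewrite -[y2](addKr x2) -E [x1 + y1]addrC addrA addrK addrC. Qed.
Lemma Z2 (V : zmodType) (a b c : V) : (a + b) - c - a = -c + b.
Proof. by rewrite addrAC [a + b]addrC addrK addrC. Qed.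
Lemma Z3 (V : zmodType) (p q r : V) : -((p - q) + r) = -p + -(r + -q).
Proof. by rewrite !opprD !opprK addrAC addrA. Qed.

Lemma Z4 (V : zmodType) (p q r : V) : - (p + q - r) + q = - p + r.
Proof. by rewrite !opprD !opprK addrAC subrK. Qed.
Lemma Z5 (V : zmodType) (p q r : V) : - ((p - q) + r) = - p + - r + q.
Proof. by rewrite !opprD opprK addrAC. Qed.
Lemma Z6 (V : zmodType) (p q : V) : - (p - q) - (- p - - q) = 0.
Proof. by rewrite opprD !opprK addNr. Qed.

Section Parts.
Variables (d e g : nat) (Phi : {poly F} -> 'M[R]_d) (Psi : {poly F} -> 'M[R]_e)
  (G : {poly F} -> 'M[R]_g) (delta : {poly F} -> 'M[R]_(e, d)).
Hypotheses (MPhi : modA Phi) (MPsi : modA Psi) (MG : modA G) (MD : derA Phi Psi delta).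
Local Notation X := (extA Phi Psi delta).
Local Notation i := (col_mx 0 1%:M : 'M[R]_(d + e, e)).
Local Notation pi := (row_mx 1%:M 0 : 'M[R]_(d, d + e)).

Lemma MX : modA X. Proof. exact: extA_mod. Qed.
Lemma Xi a : X a *m i = i *m Psi a.
Proof. by rewrite /extA mul_block_col mul_col_mx ?mulmx0 ?mul0mx ?mulmx1 ?mul1mx ?addr0 ?add0r. Qed.
Lemma piX a : pi *m X a = Phi a *m pi.
Proof. by rewrite /extA mul_row_block mul_mx_row ?mulmx0 ?mul0mx ?mulmx1 ?mul1mx ?addr0 ?add0r. Qed.
Lemma pii : pi *m i = 0.
Proof. by rewrite mul_row_col mulmx0 mul0mx addr0. Qed.
Lemma ih k (h : 'M[R]_(e, k)) : i *m h = col_mx 0 h.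
Proof. by rewrite mul_col_mx mul0mx mul1mx. Qed.
Lemma pik k (k1 : 'M[R]_(d, k)) k2 : pi *m col_mx k1 k2 = k1.
Proof. by rewrite mul_row_col mul1mx mul0mx addr0. Qed.
Lemma pimx k (y : 'M[R]_(d + e, k)) : pi *m y = usubmx y.
Proof. by rewrite -{1}[y]vsubmxK pik. Qed.
Lemma Xcol a k (k1 : 'M[R]_(d, k)) k2 :
  X a *m col_mx k1 k2 = col_mx (Phi a *m k1) (delta a *m k1 + Psi a *m k2).
Proof. by rewrite /extA mul_block_col mul0mx addr0. Qed.
Lemma colsplit k (y : 'M[R]_(d + e, k)) : exists y1 y2, y = col_mx y1 y2.
Proof. by exists (usubmx y), (dsubmx y); rewrite vsubmxK. Qed.

Theorem part1 :
  exact_seq6 (HomA G Psi) (HomA G X) (HomA G Phi) (ExtA G Psi) (ExtA G X) (ExtA G Phi)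
    (fun h : 'M[R]_(e, g) => i *m h)
    (fun h : 'M[R]_(d + e, g) => pi *m h)
    (fun h : 'M[R]_(d, g) => fun a => delta a *m h)
    (fun eta : {poly F} -> 'M[R]_(e, g) => fun a => - (i *m eta a))
    (fun eta : {poly F} -> 'M[R]_(d + e, g) => fun a => - (pi *m eta a)).
Proof.
have MX := MX.
have [LD MulD] := MD.
have m5mem : forall xi : {poly F} -> 'M[R]_(d + e, g), derA G X xi ->
    derA G Phi (fun a => - (pi *m xi a)).
  move=> xi [LX MulX]; split.
    by move=> c a b; rewrite LX mulmxDr mulmx_sc opprD scalerN.
  by move=> a b; rewrite MulX mulmxDr opprD mulmxN mulNmx !mulmxA piX.
split.
- split.
  + split.
    * by move=> h /= H; rewrite -mulmxA H !mulmxA Xi.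
    * by move=> x y _ _ ->.
    * by move=> a x y _ _ /=; rewrite mulmxDr !mulmxA Xi.
  + split.
    * by move=> h /= H; rewrite -mulmxA H !mulmxA piX.
    * by move=> x y _ _ ->.
    * by move=> a x y _ _ /=; rewrite mulmxDr !mulmxA piX.
  + split.
    * move=> h /= H; have Hall := hom_all MG MPhi H; split.
        by move=> c a b; rewrite LD mulmxDl -scalemxAl.
      by move=> a b; rewrite MulD mulmxDl -!mulmxA -Hall.
    * by move=> x y _ _ ->; exists 0 => a; rewrite subrr mul0mx mulmx0 subrr.
    * move=> a x y /= Hx _; exists (delta a *m x) => b.
      have key : delta b *m Phi a - Psi a *m delta b = delta a *m Phi b - Psi b *m delta a.
        by apply: Zk; rewrite -!MulD mulrC.
      rewrite mulmxDr opprD addrACA subrr addr0 !mulmxA -mulmxBl key mulmxBl.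
      by rewrite -[delta a *m Phi b *m x]mulmxA -(hom_all MG MPhi Hx) !mulmxA.
  + split.
    * move=> eta /= [LE ME]; split.
        by move=> c a b; rewrite LE mulmxDr mulmx_sc opprD scalerN.
      by move=> a b; rewrite ME mulmxDr opprD mulmxN mulNmx !mulmxA Xi.
    * move=> x y _ _ H.
      apply: (inner_ext _ (inner_opp (inner_lmul (fun a => esym (Xi a)) H))) => a /=.
      by rewrite mulmxBr opprB opprK addrC.
    * by move=> a x y _ _ /=; apply: inner_eq => b; rewrite mulmxDr opprD mulmxN !mulmxA Xi.
  + split.
    * by move=> xi /=; exact: m5mem.
    * move=> x y _ _ H.
      apply: (inner_ext _ (inner_opp (inner_lmul piX H))) => a /=.
      by rewrite mulmxBr opprB opprK addrC.
    * by move=> a x y _ _ /=; apply: inner_eq => b; rewrite mulmxDr opprD mulmxN !mulmxA piX.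
- by move=> x /= _; rewrite ih -col_mx0 => /eq_col_mx [_ ->].
- split.
  + move=> y /=; case: (colsplit y) => y1 [y2 ->] Hy; rewrite pik; split.
      move=> Hy1; subst y1; exists y2; split; last by rewrite ih.
      by move: Hy; rewrite mul_col_mx Xcol => /eq_col_mx [_]; rewrite mulmx0 add0r.
    by move=> [x [_ /(congr1 (mulmx pi))]]; rewrite pik mulmxA pii mul0mx.
  + move=> h /= Hh; split.
      move=> [U HU]; exists (col_mx h U); split; last by rewrite pik.
      rewrite mul_col_mx Xcol Hh; congr col_mx.
      by move: (HU 'X); rewrite subr0 => ->; rewrite subrK.
    move=> [k [Hk ->]]; case: (colsplit k) Hk => k1 [k2 ->] Hk.
    have Hall := hom_all MG MX Hk; exists k2 => a; rewrite pik subr0.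
    by move: (Hall a); rewrite mul_col_mx Xcol => /eq_col_mx [_ ->]; rewrite addrK.
  + move=> eta /= Heta; split.
      move=> [V HV]; case: (colsplit V) HV => V1 [V2 ->] HV.
      have HVa : forall a, 0 = V1 *m G a - Phi a *m V1 /\
                   - eta a = V2 *m G a - (delta a *m V1 + Psi a *m V2).
        move=> a; move: (HV a).
        by rewrite subr0 ih mul_col_mx Xcol !opp_col_mx oppr0 add_col_mx => /eq_col_mx.
      exists V1; split.
        by have [H0 _] := HVa 'X; apply/eqP; rewrite -subr_eq0 -H0.
      exists (- V2) => a; have [_ H1] := HVa a.
      by rewrite mulNmx mulmxN opprK -[eta a]opprK H1 opprB Z2.
    move=> [h [Hh [U HU]]]; have Hall := hom_all MG MPhi Hh.
    exists (col_mx h (- U)) => a.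
    rewrite subr0 ih mul_col_mx Xcol Hall !opp_col_mx oppr0 add_col_mx subrr.
    congr col_mx.
    by rewrite mulNmx mulmxN -[eta a](subrK (delta a *m h)) HU Z3.
  + move=> xi /= Hxi; split.
      move=> [U HU].
      pose V : 'M[R]_(d + e, g) := col_mx (- U) 0.
      pose xi' := fun a => xi a + - (V *m G a - X a *m V).
      have Dxi' : derA G X xi' by apply: der_add => //; apply: der_opp; apply: der_inner.
      have pxi' : forall a, pi *m xi' a = 0.
        move=> a; rewrite /xi' mulmxDr mulmxN mulmxBr !mulmxA piX -(mulmxA (Phi a)) /V !pik.
        have := HU a; rewrite subr0 => /(congr1 (fun M => - M)); rewrite opprK => ->.
        by rewrite mulNmx mulmxN opprB opprK [- (U *m G a) + _]addrC subrr.
      pose D := fun a => dsubmx (xi' a).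
      have ED : forall a, xi' a = col_mx 0 (D a).
        by move=> a; rewrite -[LHS]vsubmxK -pimx pxi'.
      have DD : derA G Psi D.
        case: Dxi' => LX MulX; split.
          move=> c a b; have := LX c a b.
          by rewrite !ED scale_col_mx add_col_mx scaler0 addr0 => /eq_col_mx [_ ->].
        move=> a b; have := MulX a b.
        by rewrite !ED Xcol mul_col_mx !mulmx0 add0r mul0mx add_col_mx addr0 => /eq_col_mx [_ ->].
      exists (fun a => - D a); split; first exact: der_opp.
      exists V => a; rewrite mulmxN opprK ih -ED /xi'.
      by rewrite opprD opprK addrA subrr add0r.
    move=> [eta [Heta HV]].
    apply: (inner_ext _ (inner_opp (inner_lmul piX HV))) => a /=.
    by rewrite subr0 mulmxBr mulmxN mulmxA pii mul0mx oppr0 subr0.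
- move=> eta /= Heta.
  have [xi [Hxi HX]] := der_exists (col_mx (- eta 'X) 0) MG MX.
  exists xi; split => //; apply: inner_eq => a.
  by apply: (der_uniq MG MPhi (m5mem _ Hxi) Heta); rewrite /= HX pik opprK.
Qed.

Lemma hpi k (h : 'M[R]_(k, d)) : h *m pi = row_mx h 0.
Proof. by rewrite mul_mx_row mulmx1 mulmx0. Qed.
Lemma rowi k (k1 : 'M[R]_(k, d)) k2 : row_mx k1 k2 *m i = k2.
Proof. by rewrite mul_row_col mulmx0 add0r mulmx1. Qed.
Lemma imx k (y : 'M[R]_(k, d + e)) : y *m i = rsubmx y.
Proof. by rewrite -{1}[y]hsubmxK rowi. Qed.
Lemma rowX a k (k1 : 'M[R]_(k, d)) k2 :
  row_mx k1 k2 *m X a = row_mx (k1 *m Phi a + k2 *m delta a) (k2 *m Psi a).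
Proof. by rewrite /extA mul_row_block mulmx0 add0r. Qed.
Lemma rowsplit k (y : 'M[R]_(k, d + e)) : exists y1 y2, y = row_mx y1 y2.
Proof. by exists (lsubmx y), (rsubmx y); rewrite hsubmxK. Qed.

Theorem part2 :
  exact_seq6 (HomA Phi G) (HomA X G) (HomA Psi G) (ExtA Phi G) (ExtA X G) (ExtA Psi G)
    (fun h : 'M[R]_(g, d) => h *m pi)
    (fun h : 'M[R]_(g, d + e) => h *m i)
    (fun h : 'M[R]_(g, e) => fun a => h *m delta a)
    (fun eta : {poly F} -> 'M[R]_(g, d) => fun a => - (eta a *m pi))
    (fun eta : {poly F} -> 'M[R]_(g, d + e) => fun a => - (eta a *m i)).
Proof.
have MX := MX.
have [LD MulD] := MD.
have m5mem : forall xi : {poly F} -> 'M[R]_(g, d + e), derA X G xi ->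
    derA Psi G (fun a => - (xi a *m i)).
  move=> xi [LX MulX]; split.
    by move=> c a b; rewrite LX mulmxDl -scalemxAl opprD scalerN.
  by move=> a b; rewrite MulX mulmxDl opprD mulmxN mulNmx -!mulmxA Xi.
split.
- split.
  + split.
    * by move=> h /= H; rewrite -mulmxA piX mulmxA H mulmxA.
    * by move=> x y _ _ ->.
    * by move=> a x y _ _ /=; rewrite mulmxDl mulmxA.
  + split.
    * by move=> h /= H; rewrite -mulmxA -Xi mulmxA H mulmxA.
    * by move=> x y _ _ ->.
    * by move=> a x y _ _ /=; rewrite mulmxDl mulmxA.
  + split.
    * move=> h /= H; have Hall := hom_all MPsi MG H; split.
        by move=> c a b; rewrite LD mulmxDr mulmx_sc.
      by move=> a b; rewrite MulD mulmxDr !mulmxA Hall.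
    * by move=> x y _ _ ->; exists 0 => a; rewrite subrr mul0mx mulmx0 subrr.
    * by move=> a x y _ _ /=; apply: inner_eq => b; rewrite mulmxDl mulmxA.
  + split.
    * move=> eta /= [LE ME]; split.
        by move=> c a b; rewrite LE mulmxDl -scalemxAl opprD scalerN.
      by move=> a b; rewrite ME mulmxDl opprD mulmxN mulNmx -!mulmxA piX.
    * move=> x y _ _ H.
      apply: (inner_ext _ (inner_opp (inner_rmul (fun a => esym (piX a)) H))) => a /=.
      by rewrite mulmxBl opprB opprK addrC.
    * by move=> a x y _ _ /=; apply: inner_eq => b; rewrite mulmxDl opprD mulmxN !mulmxA.
  + split.
    * by move=> xi /=; exact: m5mem.
    * move=> x y _ _ H.
      apply: (inner_ext _ (inner_opp (inner_rmul Xi H))) => a /=.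
      by rewrite mulmxBl opprB opprK addrC.
    * by move=> a x y _ _ /=; apply: inner_eq => b; rewrite mulmxDl opprD mulmxN !mulmxA.
- by move=> x /= _; rewrite hpi -row_mx0 => /eq_row_mx [-> _].
- split.
  + move=> y /=; case: (rowsplit y) => y1 [y2 ->] Hy; rewrite rowi; split.
      move=> Hy2; subst y2; exists y1; split; last by rewrite hpi.
      by move: Hy; rewrite rowX mul_mx_row => /eq_row_mx [+ _]; rewrite mul0mx addr0.
    by move=> [x [_ /(congr1 (mulmx^~ i))]]; rewrite rowi -mulmxA pii mulmx0.
  + move=> h /= Hh; split.
      move=> [U HU]; exists (row_mx (- U) h); split; last by rewrite rowi.
      rewrite rowX mul_mx_row Hh; congr row_mx.
      by move: (HU 'X); rewrite subr0 => ->; rewrite mulNmx mulmxN addKr.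
    move=> [k [Hk ->]]; case: (rowsplit k) Hk => k1 [k2 ->] Hk.
    have Hall := hom_all MX MG Hk; exists (- k1) => a; rewrite rowi subr0.
    move: (Hall a); rewrite rowX mul_mx_row => /eq_row_mx [E1 _].
    by rewrite mulNmx mulmxN opprK -E1 addKr.
  + move=> eta /= Heta; split.
      move=> [V HV]; case: (rowsplit V) HV => V1 [V2 ->] HV.
      have HVa : forall a, - eta a = V1 *m Phi a + V2 *m delta a - G a *m V1 /\
                   0 = V2 *m Psi a - G a *m V2.
        move=> a; move: (HV a).
        by rewrite subr0 hpi rowX mul_mx_row !opp_row_mx oppr0 add_row_mx => /eq_row_mx.
      exists (- V2); split.
        have [_ H0] := HVa 'X; rewrite /= mulNmx mulmxN; congr (- _).
        by apply/eqP; rewrite -subr_eq0 -H0.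
      exists (- V1) => a; have [H1 _] := HVa a.
      by rewrite !mulNmx mulmxN !opprK -[eta a]opprK H1 Z4.
    move=> [h [Hh [U HU]]]; have Hall := hom_all MPsi MG Hh.
    exists (row_mx (- U) (- h)) => a.
    rewrite subr0 hpi rowX mul_mx_row !opp_row_mx oppr0 add_row_mx.
    congr row_mx.
      by rewrite !mulNmx mulmxN opprK -[eta a](subrK (h *m delta a)) HU Z5.
    by rewrite mulNmx Hall mulmxN opprK addNr.
  + move=> xi /= Hxi; split.
      move=> [U HU].
      pose V : 'M[R]_(g, d + e) := row_mx 0 (- U).
      pose xi' := fun a => xi a + - (V *m X a - G a *m V).
      have Dxi' : derA X G xi' by apply: der_add => //; apply: der_opp; apply: der_inner.
      have pxi' : forall a, xi' a *m i = 0.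
        move=> a; rewrite /xi' mulmxDl mulNmx mulmxBl -mulmxA Xi mulmxA -(mulmxA (G a)) /V !rowi.
        have := HU a; rewrite subr0 => /(congr1 (fun M => - M)); rewrite opprK => ->.
        by rewrite mulNmx mulmxN Z6.
      pose D := fun a => lsubmx (xi' a).
      have ED : forall a, xi' a = row_mx (D a) 0.
        by move=> a; rewrite -[LHS]hsubmxK -imx pxi'.
      have DD : derA Phi G D.
        case: Dxi' => LX MulX; split.
          move=> c a b; have := LX c a b.
          by rewrite !ED scale_row_mx add_row_mx scaler0 addr0 => /eq_row_mx [-> _].
        move=> a b; have := MulX a b.
        by rewrite !ED rowX mul_mx_row !mul0mx mulmx0 addr0 add_row_mx addr0 => /eq_row_mx [-> _].
      exists (fun a => - D a); split; first exact: der_opp.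
      exists V => a; rewrite mulNmx opprK hpi -ED /xi'.
      by rewrite opprD opprK addrA subrr add0r.
    move=> [eta [Heta HV]].
    apply: (inner_ext _ (inner_opp (inner_rmul Xi HV))) => a /=.
    by rewrite subr0 mulmxBl mulNmx -mulmxA pii mulmx0 oppr0 subr0.
- move=> eta /= Heta.
  have [xi [Hxi HX]] := der_exists (row_mx 0 (- eta 'X)) MX MG.
  exists xi; split => //; apply: inner_eq => a.
  by apply: (der_uniq MPsi MG (m5mem _ Hxi) Heta); rewrite /= HX rowi opprK.
Qed.
End Parts.

End Abstract.

Unset Implicit Arguments.
Set Strict Implicit.

Theorem theorem10p4 (F : finFieldType) (K : fieldType) (f : {rmorphism F -> K})
  (theta : K) (d e g : nat)
  (Phi : {poly F} -> 'M[{poly K}]_d) (Psi : {poly F} -> 'M[{poly K}]_e)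
  (G : {poly F} -> 'M[{poly K}]_g) (delta : {poly F} -> 'M[{poly K}]_(e, d)) :
  is_tmodule f theta Phi -> is_tmodule f theta Psi -> is_tmodule f theta G ->
  is_der f Phi Psi delta ->
  let X := ext_tmod Phi Psi delta in
  let i := tincl K d e in
  let pi := tproj K d e in
  (* (i) *)
  exact_seq6 (HomSQ G Psi) (HomSQ G X) (HomSQ G Phi)
             (ExtSQ f G Psi) (ExtSQ f G X) (ExtSQ f G Phi)
    (fun h : 'M[{poly K}]_(e, g) => tmulmx F i h)
    (fun h : 'M[{poly K}]_(d + e, g) => tmulmx F pi h)
    (fun h : 'M[{poly K}]_(d, g) => fun a => tmulmx F (delta a) h)
    (fun eta : {poly F} -> 'M[{poly K}]_(e, g) => fun a => - tmulmx F i (eta a))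
    (fun eta : {poly F} -> 'M[{poly K}]_(d + e, g) => fun a => - tmulmx F pi (eta a))
  /\
  (* (ii) *)
  exact_seq6 (HomSQ Phi G) (HomSQ X G) (HomSQ Psi G)
             (ExtSQ f Phi G) (ExtSQ f X G) (ExtSQ f Psi G)
    (fun h : 'M[{poly K}]_(g, d) => tmulmx F h pi)
    (fun h : 'M[{poly K}]_(g, d + e) => tmulmx F h i)
    (fun h : 'M[{poly K}]_(g, e) => fun a => tmulmx F h (delta a))
    (fun eta : {poly F} -> 'M[{poly K}]_(g, d) => fun a => - tmulmx F (eta a) pi)
    (fun eta : {poly F} -> 'M[{poly K}]_(g, d + e) => fun a => - tmulmx F (eta a) i).
Proof.
move=> HPhi HPsi HG HD X i pi.
have conv : forall n (P : {poly F} -> 'M[{poly K}]_n), is_tmodule f theta P -> modA (scT f) P.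
  move=> n P HP; case: HP => L P1 M _; split.
  - by move=> c a b; rewrite L tscaleE.
  - exact: P1.
  - by move=> a b; rewrite M (tmulmxE f).
have MD : derA (scT f) Phi Psi delta.
  case: HD => L M; split.
  - by move=> c a b; rewrite L tscaleE.
  - by move=> a b; rewrite M !(tmulmxE f).
have MPhi := conv _ _ HPhi; have MPsi := conv _ _ HPsi; have MG := conv _ _ HG.
rewrite /HomSQ /ExtSQ /is_thom /is_der /is_inner !(tmulmxE f) !tscaleE'.
split.
- exact (part1 (@scD _ _ f) (@scM _ _ f) (@sc1 _ _ f) (@scC _ _ f) MPhi MPsi MG MD).
- exact (part2 (@scD _ _ f) (@scM _ _ f) (@sc1 _ _ f) (@scC _ _ f) MPhi MPsi MG MD).
Qed.
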